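(* Let $X$ be a real normed linear space, let $\Omega_1,\Omega_2\subset X$ be convex, and let $\bar x\in\Omega_1\cap\Omega_2$. Suppose there exists a bounded convex neighborhood $V$ of $\bar x$ such that $$0\in\operatorname{int}\big(\Omega_1-(\Omega_2\cap V)\big).$$ Then $$N(\bar x;\Omega_1\cap\Omega_2)=N(\bar x;\Omega_1)+N(\bar x;\Omega_2).$$
   Context: For a convex set $\Omega\subset X$ and $\bar x\in\Omega$, the normal cone is $N(\bar x;\Omega)=\{x^*\in X^*\mid \langle x^*,x-\bar x\rangle\le0\ \forall x\in\Omega\}$, where $X^*$ is the topological dual of $X$. For sets $A,B$, $A-B=\{a-b\mid a\in A,b\in B\}$; $\operatorname{int}$ is the topological interior. *)

(* Defs.v *)
From HB Require Import structures.
From mathcomp Require Import all_boot all_order all_algebra.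
From mathcomp Require Import all_classical all_reals all_analysis.
Set Implicit Arguments. Unset Strict Implicit. Unset Printing Implicit Defensive.
Import Order.TTheory GRing.Theory Num.Theory.
Import numFieldNormedType.Exports.
Local Open Scope classical_set_scope.
Local Open Scope ring_scope.

Definition is_dual_elt (R : realType) (X : normedModType R) (f : X -> R) : Prop :=
  (forall (a : R) (x y : X), f (a *: x + y) = a * f x + f y) /\ continuous f.

Definition normal_cone (R : realType) (X : normedModType R)
    (xbar : X) (Omega : set X) : set (X -> R) :=
  [set f | is_dual_elt f /\ forall x, Omega x -> f (x - xbar) <= 0].

Definition set_sum_fun (R : realType) (X : normedModType R)
    (A B : set (X -> R)) : set (X -> R) :=
  [set h | exists f g, A f /\ B g /\ h = (fun x => f x + g x)].

Definition set_diff_mink (R : realType) (X : normedModType R)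
    (A B : set X) : set X :=
  [set z | exists a b, A a /\ B b /\ z = a - b].

(* Main.v *)
Require Import Defs.
From HB Require Import structures.
From mathcomp Require Import all_boot all_order all_algebra.
From mathcomp Require Import all_classical all_reals all_analysis.
From mathcomp Require Import ring lra.
Import Order.TTheory GRing.Theory Num.Theory.
Import numFieldNormedType.Exports.
Local Open Scope classical_set_scope.
Local Open Scope ring_scope.

Section HB.
Variables (R : realType) (X : lmodType R) (P : set (X * R)).
Hypothesis Padd : forall z t w u, P (z,t) -> P (w,u) -> P (z+w, t+u).
Hypothesis Pscale : forall z t a, 0 < a -> P (z,t) -> P (a*:z, a*t).
Hypothesis Pdom : forall z, exists t, P (z,t).
Hypothesis P0 : forall t, P (0,t) -> 0 <= t.

Definition Qgood (A : set (X * R)) :=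
  [/\ (forall x r y s a, A (x,r) -> A (y,s) -> A (a*:x+y, a*r+s)),
      (forall x r s, A (x,r) -> A (x,s) -> r = s) &
      (forall x r t, A (x,r) -> P (x,t) -> r <= t)].

Lemma Qchain : forall F : set (set (X * R)),
  F `<=` Qgood -> total_on F subset -> Qgood (\bigcup_(A in F) A).
Proof.
move=> F FQ Ftot; split.
- move=> x r y s a [A FA Axr] [B FB Bys].
  have [AB|BA] := Ftot A B FA FB.
  + exists B => //; have [cB _ _] := FQ B FB; exact: cB (AB _ Axr) Bys.
  + exists A => //; have [cA _ _] := FQ A FA; exact: cA Axr (BA _ Bys).
- move=> x r s [A FA Axr] [B FB Bxs].
  have [AB|BA] := Ftot A B FA FB.
  + have [_ fB _] := FQ B FB; exact: fB (AB _ Axr) Bxs.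
  + have [_ fA _] := FQ A FA; exact: fA Axr (BA _ Bxs).
- move=> x r t [A FA Axr] Pxt; have [_ _ dA] := FQ A FA; exact: dA Axr Pxt.
Qed.

Lemma Qextend (A : set (X * R)) : Qgood A -> A (0,0) ->
  forall x0, ~ (exists r, A (x0, r)) ->
  exists B, A `<` B /\ Qgood B.
Proof.
move=> [cA fA dA] A00 x0 nx0.
have sA : forall x r a, A (x,r) -> A (a*:x, a*r).
  move=> x r a Axr; have := cA _ _ _ _ a Axr A00; by rewrite addr0 addr0.
have pA : forall x r y s, A (x,r) -> A (y,s) -> A (x+y, r+s).
  move=> x r y s Axr Ays; have := cA _ _ _ _ 1 Axr Ays; by rewrite scale1r mul1r.
pose S := [set v | exists y r t, [/\ A (y,r), P (y - x0, t) & v = r - t]].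
have [tm Ptm] := Pdom (0 - x0).
have S0 : S !=set0 by exists (0 - tm); exists 0, 0, tm.
have Sub : forall z u tau, A (z,u) -> P (z + x0, tau) -> ubound S (tau - u).
  move=> z u tau Azu Ptau _ [y [r [t [Ayr Pyt ->]]]].
  have H1 := pA _ _ _ _ Ayr Azu.
  have H2 := Padd _ _ _ _ Pyt Ptau.
  have E : y - x0 + (z + x0) = y + z by rewrite addrACA addNr addr0.
  rewrite E in H2.
  have := dA _ _ _ H1 H2; lra.
have [tp Ptp] := Pdom x0.
have Shas : has_ubound S.
  exists (tp - 0); apply: (Sub 0 0 tp A00); by rewrite add0r.
pose c := sup S.
have c_ub : forall v, S v -> v <= c by move=> v Sv; exact: ub_le_sup.
have c_lb : forall z u tau, A (z,u) -> P (z + x0, tau) -> c <= tau - u.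
  move=> z u tau Azu Ptau; exact: ge_sup S0 (Sub _ _ _ Azu Ptau).
pose B := [set p | exists y r t, A (y,r) /\ p = (y + t *: x0, r + t * c)].
exists B; split; [split|split].
- move=> [y r] Ayr; exists y, r, 0; by rewrite scale0r mul0r !addr0.
- move=> BA; have : B (x0, c).
    exists 0, 0, 1; split => //; by rewrite scale1r mul1r !add0r.
  move=> /BA Ax0; apply: nx0; by exists c.
- move=> x r y s a [y1 [r1 [t1 [A1 E1]]]] [y2 [r2 [t2 [A2 E2]]]].
  case: E1 => -> ->; case: E2 => -> ->.
  exists (a*:y1 + y2), (a*r1 + r2), (a*t1 + t2); split; first exact: cA.
  congr (_,_); last by ring.
  by rewrite scalerDr scalerDl scalerA addrACA.
- move=> x r s [y1 [r1 [t1 [A1 E1]]]] [y2 [r2 [t2 [A2 E2]]]].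
  case: E1 => Ex Er; case: E2 => Ex' Es; rewrite Er Es.
  have [e12|ne12] := eqVneq t1 t2.
    subst t2; have ey : y1 = y2 by apply: (addIr (t1 *: x0)); rewrite -Ex -Ex'.
    subst y2; by rewrite (fA _ _ _ A1 A2).
  exfalso; apply: nx0.
  have ne : t1 - t2 != 0 by rewrite subr_eq0.
  have Ex0 : x0 = (t1 - t2)^-1 *: (y2 + (-1) *: y1).
    apply: (scalerI ne); rewrite scalerA divff // scale1r.
    have H : y1 + t1 *: x0 = y2 + t2 *: x0 by rewrite -Ex -Ex'.
    rewrite scalerBl.
    have -> : t1 *: x0 = y2 + t2*:x0 - y1 by rewrite -H addrC addKr.
    by rewrite scaleN1r addrAC addrK.
  exists ((t1 - t2)^-1 * (r2 + (-1) * r1)); rewrite Ex0.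
  apply: (sA); exact: pA A2 (sA _ _ _ A1).
- move=> x r tau [y [r1 [t [A1 E1]]]] Ptau; case: E1 => Ex Er; subst x r.
  have [t0|t0|t0] := ltgtP t 0.
  + pose s := - t; have s0 : 0 < s by rewrite /s oppr_gt0.
    have H1 := sA _ _ s^-1 A1.
    have si : 0 < s^-1 by rewrite invr_gt0.
    have H2 := Pscale _ _ _ si Ptau.
    have E : s^-1 *: (y + t *: x0) = s^-1 *: y - x0.
      rewrite scalerDr scalerA /s; congr (_ + _).
      by rewrite invrN mulNr mulVf ?scaleN1r // lt_eqF.
    rewrite E in H2.
    have := c_ub (s^-1 * r1 - s^-1 * tau).
    have Sv : S (s^-1 * r1 - s^-1 * tau) by exists (s^-1 *: y), (s^-1 * r1), (s^-1 * tau).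
    move=> /(_ Sv).
    rewrite -mulrBr ler_pdivrMl // /s => h.
    have : r1 - tau <= - t * c by [].
    lra.
  + have H1 := sA _ _ t^-1 A1.
    have ti : 0 < t^-1 by rewrite invr_gt0.
    have H2 := Pscale _ _ _ ti Ptau.
    have E : t^-1 *: (y + t *: x0) = t^-1 *: y + x0.
      by rewrite scalerDr scalerA mulVf ?scale1r // gt_eqF.
    rewrite E in H2.
    have := c_lb _ _ _ H1 H2.
    rewrite -mulrBr ler_pdivlMl // => h.
    lra.
  + subst t; rewrite scale0r addr0 mul0r addr0 in Ptau *; exact: dA A1 Ptau.
Qed.

Lemma hahn_banach_cone : exists f : X -> R,
  (forall a x y, f (a*:x+y) = a * f x + f y) /\
  (forall z t, P (z,t) -> f z <= t).
Proof.
have [A [QA Amax]] := Zorn_bigcup Qchain.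
have [cA fA dA] := QA.
have A00 : A (0,0).
  apply: contrapT => nA.
  apply: (Amax [set (0,0)]).
    split.
      move=> [x r] Axr; exfalso; apply: nA.
      have := cA _ _ _ _ (-1) Axr Axr.
      by rewrite scaleN1r mulN1r !addNr.
    move=> /(_ (0,0) erefl); exact: nA.
  split.
  - move=> x r y s a [-> ->] [-> ->]; by rewrite scaler0 mulr0 !addr0.
  - by move=> x r s [_ ->] [_ ->].
  - move=> x r t [-> ->]; exact: P0.
have Adom : forall x, exists r, A (x,r).
  move=> x0; apply: contrapT => nx0.
  have [B [AB QB]] := @Qextend A QA A00 x0 nx0.
  exact: Amax AB QB.
pose f x := xget 0 [set r | A (x,r)].
have Af : forall x, A (x, f x) by move=> x; exact: (@xgetPex _ 0 [set r | A (x, r)] (Adom x)).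
exists f; split.
- move=> a x y; apply: fA (Af _) _; exact: cA (Af x) (Af y).
- move=> z t Pzt; exact: dA (Af z) Pzt.
Qed.
End HB.
Arguments hahn_banach_cone {R X P}.

Section Lin.
Variables (R : realType) (X : normedModType R) (f : X -> R).
Hypothesis lin : forall a x y, f (a *: x + y) = a * f x + f y.

Lemma lin0 : f 0 = 0.
Proof. have := lin 1 0 0; rewrite scaler0 addr0 mul1r; lra. Qed.

Lemma linZ a x : f (a *: x) = a * f x.
Proof. by have := lin a x 0; rewrite addr0 lin0 addr0. Qed.

Lemma linD x y : f (x + y) = f x + f y.
Proof. by have := lin 1 x y; rewrite scale1r mul1r. Qed.

Lemma linN x : f (- x) = - f x.
Proof. by rewrite -scaleN1r linZ mulN1r. Qed.

Lemma linB x y : f (x - y) = f x - f y.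
Proof. by rewrite linD linN. Qed.

Lemma lin_bound r B : 0 < r -> (forall z, `|z| < r -> f z <= B) ->
  exists K, 0 <= K /\ forall z, `|f z| <= K * `|z|.
Proof.
move=> r0 HB.
have B0 : 0 <= B by rewrite -lin0; apply: HB; rewrite normr0.
exists (2 * B / r); split; first by apply: divr_ge0; [apply: mulr_ge0 | apply: ltW].
move=> z; have [->|z0] := eqVneq z 0; first by rewrite lin0 normr0 normr0 mulr0.
have nz : 0 < `|z| by rewrite normr_gt0.
pose a := r / (2 * `|z|).
have a0 : 0 < a by apply: divr_gt0 => //; apply: mulr_gt0.
have nw : `|a *: z| < r.
  rewrite normrZ gtr0_norm // /a.
  have -> : r / (2 * `|z|) * `|z| = r / 2 by field; rewrite gt_eqF.
  lra.
have h1 := HB _ nw.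
have h2 : f (- (a *: z)) <= B by apply: HB; rewrite normrN.
rewrite linN linZ in h2; rewrite linZ in h1.
have : a * `|f z| <= B.
  rewrite -[a]gtr0_norm // -normrM ler_norml; apply/andP; split => //; lra.
move=> h; rewrite -(ler_pM2l a0).
have -> : a * (2 * B / r * `|z|) = B by rewrite /a; field; apply/andP; split; rewrite gt_eqF.
exact: h.
Qed.

Lemma lin_cont K : (forall z, `|f z| <= K * `|z|) -> continuous f.
Proof.
move=> HK x; apply/cvgrPdist_lt => e e0.
have K0 : 0 < `|K| + 1 by apply: ltr_pwDr.
apply/nbhs_ballP; exists (e / (`|K| + 1)); first exact: divr_gt0.
move=> y; rewrite -ball_normE /= => hy.
rewrite -linB; apply: le_lt_trans (HK _) _.
apply: le_lt_trans (_ : _ <= `|K| * `|x - y|) _.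
  apply: ler_wpM2r => //; exact: ler_norm.
apply: le_lt_trans (_ : _ <= (`|K| + 1) * `|x - y|) _.
  apply: ler_wpM2r => //; lra.
by rewrite -ltr_pdivlMl // mulrC.
Qed.

End Lin.
Arguments lin0 {R X f}.
Arguments linZ {R X f}.
Arguments linD {R X f}.
Arguments linN {R X f}.
Arguments linB {R X f}.
Arguments lin_bound {R X f}.
Arguments lin_cont {R X f}.

Lemma convl (R : realType) (X : normedModType R) (A : set X) (l m : R) (x y : X) :
  convex_set A -> A x -> A y -> 0 <= l -> 0 <= m -> l + m = 1 -> A (l *: x + m *: y).
Proof.
move=> cA Ax Ay l0 m0 lm.
have l1 : l <= 1 by lra.
have := cA x y (Itv01 l0 l1) (mem_set Ax) (mem_set Ay).
rewrite inE /=. have -> : m = 1 - l by lra. done.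
Qed.

Lemma convB (R : realType) (X : normedModType R) (l m : R) (a b c d : X) :
  l *: a + m *: b - (l *: c + m *: d) = l *: (a - c) + m *: (b - d).
Proof. by rewrite !scalerBr opprD addrACA. Qed.

Theorem theorem3p1 (R : realType) (X : normedModType R)
    (Omega1 Omega2 : set X) (xbar : X) :
  convex_set Omega1 -> convex_set Omega2 ->
  Omega1 xbar -> Omega2 xbar ->
  (exists V : set X,
      convex_set V /\ bounded_set V /\ nbhs xbar V /\
      (interior (set_diff_mink Omega1 (Omega2 `&` V))) 0) ->
  normal_cone xbar (Omega1 `&` Omega2) =
    set_sum_fun (normal_cone xbar Omega1) (normal_cone xbar Omega2).
Proof.
move=> c1 c2 x1b x2b [V [cV [bV [nV int0]]]].
apply/seteqP; split; last first.
  move=> h [f [g [[[fl fc] fN] [[[gl gc] gN] ->]]]].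
  split; [split|].
  - move=> a x y; rewrite fl gl; ring.
  - move=> x; apply: cvgD; [exact: fc | exact: gc].
  - move=> x O12; case: O12 => HO1x HO2x; have := fN x HO1x; have := gN x HO2x; lra.
move=> xs [[xl xc] xN].
have [d d0 Hd] : exists2 d, 0 < d & forall z, `|z| < d -> xs z <= 1.
  have := xc 0; move/cvgrPdist_lt => /(_ 1 ltr01) /nbhs_ballP [d d0 Hd].
  exists d => // z hz.
  have := Hd z; rewrite -ball_normE /= sub0r normrN => /(_ hz).
  rewrite (lin0 xl) sub0r normrN => h; exact: (le_trans (ler_norm _) (ltW h)).
have [Kx [Kx0 HKx]] := lin_bound xl _ _ d0 Hd.
have [M HM] : exists M, forall v, V v -> `|v| <= M.
  case: bV => M [_ HM]; exists (M+1) => v Vv; apply: (HM (M+1)) => //; lra.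
pose B0 := Kx * (`|xbar| + M).
have HB0 : forall v, V v -> xs (xbar - v) <= B0.
  move=> v Vv; apply: le_trans (ler_norm _) _; apply: le_trans (HKx _) _.
  apply: ler_wpM2l; first exact: Kx0.
  apply: le_trans (ler_normB _ _) _.
  by apply: lerD => //; exact: HM.
have [r r0 Hr] : exists2 r, 0 < r &
    forall z, `|z| < r -> set_diff_mink Omega1 (Omega2 `&` V) z.
  move: int0 => /nbhs_ballP [r r0 Hr]; exists r => // z hz; apply: Hr.
  by rewrite -ball_normE /= sub0r normrN.
have Vxb : V xbar := nbhs_singleton nV.
pose P := [set p : X * R | exists s x1 x2, [/\ 0 < s, Omega1 x1, (Omega2 `&` V) x2,
   p.1 = s *: (x1 - x2) & s * xs (xbar - x2) <= p.2]].
have Padd : forall z t w u, P (z,t) -> P (w,u) -> P (z+w, t+u).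
  move=> z t w u [s [x1 [x2 [s0 HO1 [ HO2 V2] ez it]]]]
    [s' [x1' [x2' [s0' HO1' [ HO2' V2'] ez' it']]]].
  rewrite /= in ez ez' it it'.
  pose S := s + s'; pose l := s / S; pose m := s' / S.
  have S0 : 0 < S by apply: addr_gt0.
  have l0 : 0 <= l by apply: divr_ge0; apply: ltW.
  have m0 : 0 <= m by apply: divr_ge0; apply: ltW.
  have lm : l + m = 1 by rewrite /l /m -mulrDl divff // gt_eqF.
  have Sl : S * l = s by rewrite /l mulrC divfK // gt_eqF.
  have Sm : S * m = s' by rewrite /m mulrC divfK // gt_eqF.
  exists S, (l *: x1 + m *: x1'), (l *: x2 + m *: x2'); split => //=.
  - exact: convl.
  - by split; apply: convl.
  - by rewrite ez ez' convB [in RHS]scalerDr !scalerA Sl Sm.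
  - have -> : xbar = l *: xbar + m *: xbar by rewrite -scalerDl lm scale1r.
    rewrite convB (linD xl) !(linZ xl) mulrDr !mulrA [S * s]mulrC [S * s']mulrC !mulfK ?gt_eqF //.
    exact: lerD.
have Pscale : forall z t a, 0 < a -> P (z,t) -> P (a*:z, a*t).
  move=> z t a a0 [s [x1 [x2 [s0 HO1 HO2 ez it]]]].
  rewrite /= in ez it.
  exists (a * s), x1, x2; split => //=.
  - exact: mulr_gt0.
  - by rewrite ez scalerA.
  - by rewrite -mulrA ler_pM2l.
have Pdom : forall z, exists t, P (z,t).
  move=> z; pose s := 2 * (`|z| + 1) / r.
  have z1 : 0 < `|z| + 1 by have := normr_ge0 z; lra.
  have s0 : 0 < s by apply: divr_gt0 => //; apply: mulr_gt0.
  have nw : `|s^-1 *: z| < r.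
    rewrite normrZ gtr0_norm ?invr_gt0 //.
    have -> : s^-1 * `|z| = r * `|z| / (2 * (`|z| + 1)).
      by rewrite /s; field; rewrite !gt_eqF.
    rewrite ltr_pdivrMr; last by apply: mulr_gt0.
    rewrite ltr_pM2l //; lra.
  have [x1 [x2 [ HO1 [ HO2 ew]]]] := Hr _ nw.
  exists (s * xs (xbar - x2)), s, x1, x2; split => //=.
  by rewrite -ew scalerA divff ?scale1r // gt_eqF.
have P0 : forall t, P (0,t) -> 0 <= t.
  move=> t [s [x1 [x2 [s0 HO1 [ HO2 V2] ez it]]]].
  rewrite /= in ez it.
  have : s *: (x1 - x2) == 0 by rewrite -ez.
  rewrite scaler_eq0 gt_eqF //= subr_eq0 => /eqP e; subst x1.
  have := xN x2 (conj HO1 HO2).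
  rewrite -opprB (linN xl) oppr_le0 => h.
  apply: le_trans it; exact: mulr_ge0 (ltW s0) h.
have [l [ll lP]] := hahn_banach_cone Padd Pscale Pdom P0.
have Pone : forall x1 x2, Omega1 x1 -> Omega2 x2 -> V x2 -> P (x1 - x2, xs (xbar - x2)).
  move=> x1 x2 HO1 HO2 V2; exists 1, x1, x2; split => //=.
  - by rewrite scale1r.
  - by rewrite mul1r.
have lcont : continuous l.
  have lb : forall z, `|z| < r -> l z <= B0.
    move=> z hz; have [x1 [x2 [ HO1 [[ HO2 V2] ->]]]] := Hr _ hz.
    apply: le_trans (HB0 _ V2); exact: lP (Pone _ _ HO1 HO2 V2).
  have [K [_ HK]] := lin_bound ll _ _ r0 lb.
  exact: lin_cont ll _ HK.
pose g := fun x => xs x - l x.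
have gl : forall a x y, g (a *: x + y) = a * g x + g y.
  by move=> a x y; rewrite /g xl ll; ring.
exists l, g; split; [|split].
- split => // x HO1.
  have := lP _ _ (Pone _ _ HO1 x2b Vxb).
  by rewrite subrr (lin0 xl).
- split; first split => //.
    by move=> x; apply: cvgB; [exact: xc | exact: lcont].
  have gV : forall x2, Omega2 x2 -> V x2 -> g (x2 - xbar) <= 0.
    move=> x2 HO2 V2; have := lP _ _ (Pone _ _ x1b HO2 V2).
    rewrite /g -opprB (linN xl) (linN ll); lra.
  move=> x2 HO2.
  move: nV => /nbhs_ballP [e /= e0 He].
  pose t := e / (e + `|x2 - xbar|).
  have ed : 0 < e + `|x2 - xbar| by apply: ltr_pwDl.
  have t0 : 0 < t by apply: divr_gt0.
  have t1 : t <= 1 by rewrite ler_pdivrMr // mul1r lerDl.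
  pose y := t *: x2 + (1 - t) *: xbar.
  have ey : y - xbar = t *: (x2 - xbar).
    by rewrite /y scalerBl scale1r scalerBr addrA addrAC addrK.
  have Oy : Omega2 y by apply: convl => //; [apply: ltW | lra | lra].
  have Vy : V y.
    apply: He; rewrite -ball_normE /= distrC ey normrZ gtr0_norm //.
    rewrite /t mulrAC ltr_pdivrMr // ltr_pM2l //; lra.
  have := gV _ Oy Vy; rewrite ey (linZ gl) pmulr_rle0 //.
- apply/funext => x /=; by rewrite /g addrC subrK.
Qed.
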